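(* Let $X$ be a finite set with $|X|\ge 3$. If $\mathcal T$ is a minimum triplet cover for some tree $T\in B(X)$, then $\mu(\mathcal T)=2$.
   Context: A binary phylogenetic $X$-tree is an unrooted tree whose leaf set is $X$ and all of whose non-leaf vertices are unlabelled of degree three; $B(X)$ is the set of such trees. Pairs in $\binom{X}{2}$ are written $ab$, triples $abc$. Given $\mathcal T\subseteq\binom{X}{2}$, a triple $abc$ supports an interior vertex $v$ if $a,b,c$ lie one in each of the three components of $T$ minus $v$ and $ab,ac,bc\in\mathcal T$; $\mathcal T$ is a triplet cover for $T$ if every interior vertex is supported by some triple; it is minimum if no triplet cover for $T$ has smaller cardinality. The multiplicity $\mu_{\mathcal T}(x)$ of $x\in X$ is the number of elements of $\mathcal T$ containing $x$, and $\mu(\mathcal T)=\min\{\mu_{\mathcal T}(x):x\in X\}$. *)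

(* Defs.v *)
From mathcomp Require Import all_boot.
Set Implicit Arguments. Unset Strict Implicit. Unset Printing Implicit Defensive.

Section Trees.
Variables (X V : finType) (e : rel V) (phi : X -> V).

Definition deg (v : V) : nat := #|[set y | e v y]|.

Definition is_tree : Prop :=
  symmetric e /\ irreflexive e /\ (forall x y, connect e x y) /\
  (forall s : seq V, uniq s -> 3 <= size s -> ~~ cycle e s).

Definition binary_Xtree : Prop :=
  is_tree /\ injective phi /\
  (forall v, (deg v == 1) = (v \in codom phi)) /\
  (forall v, v \notin codom phi -> deg v = 3).

Definition interior (v : V) : bool := v \notin codom phi.

Definition same_comp_minus (v x y : V) : bool :=
  connect [rel a b | e a b && (a != v) && (b != v)] x y.

Definition sep_at (v : V) (x y : V) : bool :=
  [&& x != v, y != v & ~~ same_comp_minus v x y].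

Definition is_pairset (Tc : {set {set X}}) : Prop :=
  forall p, p \in Tc -> #|p| = 2.

Definition supports (Tc : {set {set X}}) (a b c : X) (v : V) : bool :=
  [&& sep_at v (phi a) (phi b), sep_at v (phi a) (phi c), sep_at v (phi b) (phi c),
      [set a; b] \in Tc, [set a; c] \in Tc & [set b; c] \in Tc].

Definition triplet_cover (Tc : {set {set X}}) : Prop :=
  is_pairset Tc /\
  forall v, interior v -> exists a b c, supports Tc a b c v.

Definition min_triplet_cover (Tc : {set {set X}}) : Prop :=
  triplet_cover Tc /\
  forall Tc' : {set {set X}}, triplet_cover Tc' -> #|Tc| <= #|Tc'|.

End Trees.

Definition mult (X : finType) (Tc : {set {set X}}) (x : X) : nat :=
  #|[set p in Tc | x \in p]|.

Definition min_mult_eq (X : finType) (Tc : {set {set X}}) (m : nat) : Prop :=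
  (forall x, m <= mult Tc x) /\ exists x, mult Tc x = m.

(* Main.v *)
Require Import Defs.
From mathcomp Require Import all_boot.
From mathcomp Require Import zify.
Set Implicit Arguments. Unset Strict Implicit. Unset Printing Implicit Defensive.

Section TreeBasics.
Variables (X V : finType) (e : rel V) (phi : X -> V).
Hypothesis esym : symmetric e.
Hypothesis eirr : irreflexive e.
Hypothesis econn : forall x y, connect e x y.
Hypothesis eacyc : forall s : seq V, uniq s -> 3 <= size s -> ~~ cycle e s.
Hypothesis phi_inj : injective phi.
Hypothesis leaf_deg : forall v, (deg e v == 1) = (v \in codom phi).
Hypothesis int_deg : forall v, v \notin codom phi -> deg e v = 3.

Local Notation sc := (same_comp_minus e).
Local Notation er v := [rel a b | e a b && (a != v) && (b != v)].

Lemma er_sym v : symmetric (er v).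
Proof.
move=> a b /=; rewrite esym.
by case: (a != v); case: (b != v); rewrite ?andbF ?andbT.
Qed.

Lemma sc_sym v x y : sc v x y = sc v y x.
Proof. exact: (sym_connect_sym (er_sym v)). Qed.

Lemma sc_trans v x y z : sc v x y -> sc v y z -> sc v x z.
Proof. exact: connect_trans. Qed.

Lemma sc_refl v x : sc v x x.
Proof. exact: connect0. Qed.

Lemma sc_edge v a b : e a b -> a != v -> b != v -> sc v a b.
Proof. by move=> eab av bv; apply: connect1; rewrite /= eab av bv. Qed.

Lemma sc_self v y : sc v v y -> y = v.
Proof.
case/connectP => [[|a p]] /=; first by move=> _ ->.
by rewrite eqxx andbF.
Qed.

Lemma sc_self' v y : sc v y v -> y = v.
Proof. by rewrite sc_sym; apply: sc_self. Qed.

Lemma nbr x v : x != v -> exists2 n, e v n & sc v x n.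
Proof.
have := econn x v; case/connectP => p; elim: p x => [|a p IH] x /=.
  by move=> _ xv; rewrite xv eqxx.
case/andP => exa pa la xv.
case: (eqVneq a v) => [av|av].
  by exists x; [rewrite esym -av | exact: sc_refl].
have [n en sn] := IH a pa la av.
by exists n => //; apply: sc_trans (sc_edge exa xv av) sn.
Qed.

Lemma sc_mono v u s t : (forall w, sc v s w -> w != u) -> sc v s t -> sc u s t.
Proof.
move=> H /connectP [p pth ->].
suff: forall x, sc v s x -> sc u s x -> path (er v) x p -> sc u s (last x p).
  by apply; [exact: sc_refl | exact: sc_refl | exact: pth].
elim: p {pth} => [|a p IH] x Hx Hux //=.
case/andP => /andP[/andP[exa xv] av] pa; apply: IH pa.
  by apply: sc_trans Hx (sc_edge exa xv av).
by apply: sc_trans Hux (sc_edge exa (H _ Hx) (H a (sc_trans Hx (sc_edge exa xv av)))).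
Qed.

Lemma nest v u s : u != v -> s != v -> ~~ sc v s u ->
  (forall t, sc v s t -> sc u s t) /\ sc u s v.
Proof.
move=> uv sv nsu.
have H : forall w, sc v s w -> w != u.
  by move=> w sw; apply/eqP => wu; rewrite -wu sw in nsu.
split; first by move=> t; apply: sc_mono.
have [n en sn] := nbr sv.
apply: sc_trans (sc_mono H sn) (sc_edge _ (H _ sn) _); first by rewrite esym.
by rewrite eq_sym.
Qed.

Lemma ac p n w : e p n -> sc n w p -> sc p w n -> False.
Proof.
move=> epn h1 h2.
pose e' := [rel a b | e a b && ~~ (((a == p) && (b == n)) || ((a == n) && (b == p)))].
have e'sym : symmetric e'.
  move=> a b /=; rewrite esym; congr (_ && ~~ _).
  by case: (a == p); case: (b == n); case: (a == n); case: (b == p).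
have sub1 : forall v, v \in [:: p; n] -> subrel (er v) (connect e').
  move=> v; rewrite !inE => /orP[]/eqP -> a b /andP[/andP[eab av] bv];
  apply: connect1; rewrite /= eab /=; apply/negP => /orP[]/andP[/eqP ea /eqP eb];
  by move: av bv; rewrite ?ea ?eb eqxx.
have c1 : connect e' w p by apply: (connect_sub (sub1 n _)); rewrite ?inE ?eqxx ?orbT.
have c2 : connect e' w n by apply: (connect_sub (sub1 p _)); rewrite ?inE ?eqxx.
have : connect e' n p.
  by apply: connect_trans c1; rewrite (sym_connect_sym e'sym).
case/connectP => q pq lq.
move: lq; case: (shortenP pq) => q' pq' uq' _ lq.
have lq' : last n q' = p by rewrite lq.
have pn : p != n by apply/eqP => pn; move: epn; rewrite pn eirr.
suff [Hs Hc] : 3 <= size (n :: q') /\ cycle e (n :: q').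
  by move: (eacyc uq' Hs); rewrite Hc.
clear lq; case: q' pq' uq' lq' => [|a [|b q'']].
- by move=> _ _ /= np; rewrite np eqxx in pn.
- by move=> H _ la; move: H; rewrite /= in la; rewrite la /= !eqxx andbT orbT andbF.
move=> pth _ lst; split => //.
change (path e n (rcons (a :: b :: q'') n)).
rewrite rcons_path (sub_path _ pth) /=; last by move=> x y /andP[].
by move: lst => /= ->.
Qed.


Lemma leaf_nbr v : v \in codom phi -> exists m, forall y, e v y = (y == m).
Proof.
rewrite -leaf_deg /deg => /cards1P [m Hm]; exists m => y.
by rewrite -in_set1 -Hm inE.
Qed.

Lemma leaf_sc v m s t : (forall y, e v y = (y == m)) -> s != v -> t != v -> sc v s t.
Proof.
move=> Hm sv tv; have [n1 en1 s1] := nbr sv; have [n2 en2 s2] := nbr tv.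
rewrite Hm in en1; rewrite Hm in en2; move/eqP: en1 => en1; move/eqP: en2 => en2.
by subst; apply: sc_trans s1 _; rewrite sc_sym.
Qed.

Lemma sep_nonleaf v s t : sep_at e v s t -> v \notin codom phi.
Proof.
case/and3P => sv tv nst; apply/negP => /leaf_nbr [m Hm].
by rewrite (leaf_sc Hm sv tv) in nst.
Qed.

Lemma leaf_iso v m t : (forall y, e v y = (y == m)) -> sc m v t -> t = v.
Proof.
move=> Hm /connectP [[|a p]] /=; first by move=> _ ->.
by rewrite Hm => /andP[/andP[/andP[/eqP -> _]]]; rewrite eqxx.
Qed.

Lemma deg_le3 v : deg e v <= 3.
Proof.
case: (boolP (v \in codom phi)) => [|/int_deg -> //].
by rewrite -leaf_deg => /eqP ->.
Qed.

Lemma sep_sym v s t : sep_at e v s t = sep_at e v t s.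
Proof. by rewrite /sep_at sc_sym andbCA. Qed.

Lemma sep_neq v s t : sep_at e v s t -> s != t.
Proof. by case/and3P => _ _; apply: contra => /eqP ->; apply: sc_refl. Qed.

Lemma sep_sc v s t s' : sep_at e v s t -> sc v s s' -> s' != v -> sep_at e v s' t.
Proof.
case/and3P => sv tv nst ss' s'v; rewrite /sep_at s'v tv /=.
by apply: contra nst; apply: sc_trans.
Qed.

Lemma card4 (T : finType) (a b c d : T) : a != b -> a != c -> a != d ->
  b != c -> b != d -> c != d -> #|[:: a; b; c; d]| = 4.
Proof.
move=> ab ac ad bc bd cd; apply/card_uniqP.
by rewrite /= !inE !negb_or ab ac ad bc bd cd.
Qed.

Lemma no4 v a b c d : sep_at e v a b -> sep_at e v a c -> sep_at e v a d ->
  sep_at e v b c -> sep_at e v b d -> sep_at e v c d -> False.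
Proof.
move=> hab hac had hbc hbd hcd.
have av : a != v by case/and3P: hab.
have bv : b != v by case/and3P: hbc.
have cv : c != v by case/and3P: hcd.
have dv : d != v by case/and3P: hcd.
have [na ea sa] := nbr av; have [nb eb sb] := nbr bv.
have [nc ec s_c] := nbr cv; have [nd ed sd] := nbr dv.
have dist : forall s t ns nt, sep_at e v s t -> sc v s ns -> sc v t nt -> ns != nt.
  move=> s t ns nt /and3P[_ _ nst] ss tt; apply/eqP => E; subst.
  by move/negP: nst; apply; apply: sc_trans ss _; rewrite sc_sym.
have : #|[:: na; nb; nc; nd]| <= deg e v.
  apply: subset_leq_card; apply/subsetP => y; rewrite !inE.
  by case/or4P => /eqP ->.
rewrite card4 ?(dist _ _ _ _ hab sa sb) ?(dist _ _ _ _ hac sa s_c) ?(dist _ _ _ _ had sa sd)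
  ?(dist _ _ _ _ hbc sb s_c) ?(dist _ _ _ _ hbd sb sd) ?(dist _ _ _ _ hcd s_c sd) //.
by move=> H; move: (leq_trans H (deg_le3 v)).
Qed.

Lemma in_triple v s a b c : sep_at e v a b -> sep_at e v a c -> sep_at e v b c ->
  s != v -> [|| sc v s a, sc v s b | sc v s c].
Proof.
move=> hab hac hbc sv; apply/negPn/negP; rewrite !negb_or => /and3P[nsa nsb nsc].
have av : a != v by case/and3P: hab.
have bv : b != v by case/and3P: hbc.
have cv : c != v by case/and3P: hbc.
by apply: (@no4 v s a b c) => //; rewrite /sep_at sv ?av ?bv ?cv.
Qed.

Lemma two_same u s t p : sep_at e u s t -> sc u s p -> sc u t p -> False.
Proof.
case/and3P => _ _ nst h1 h2; move/negP: nst; apply.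
by apply: sc_trans h1 _; rewrite sc_sym.
Qed.

Lemma med_uniq u p a b c : sep_at e u a b -> sep_at e u a c -> sep_at e u b c ->
  sep_at e p a b -> sep_at e p a c -> sep_at e p b c -> u = p.
Proof.
move=> uab uac ubc pab pac pbc; apply/eqP/negPn/negP => up.
have pu : p != u by rewrite eq_sym.
have key : forall s t, sep_at e u s t -> sep_at e p s t -> ~~ sc u s p -> ~~ sc u t p -> False.
  move=> s t /and3P[su tu _] /and3P[_ _ nst] hs ht.
  have [_ h1] := nest pu su hs; have [_ h2] := nest pu tu ht.
  by move/negP: nst; apply; apply: sc_trans h1 _; rewrite sc_sym.
case: (boolP (sc u a p)) => hap.
  have hbp : ~~ sc u b p by apply/negP => h; apply: (two_same uab hap h).
  have hcp : ~~ sc u c p by apply/negP => h; apply: (two_same uac hap h).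
  exact: (key b c).
case: (boolP (sc u b p)) => hbp.
  have hcp : ~~ sc u c p by apply/negP => h; apply: (two_same ubc hbp h).
  exact: (key a c).
exact: (key a b).
Qed.

Definition Cs v s := [set t | sc v s t].

Lemma bigger v u s : u != v -> s != v -> ~~ sc v s u -> #|Cs v s| < #|Cs u s|.
Proof.
move=> uv sv nsu; have [sub h] := nest uv sv nsu.
apply: proper_card; apply/properP; split.
  by apply/subsetP => t; rewrite !inE; apply: sub.
exists v; first by rewrite inE.
by rewrite inE; apply/negP => /sc_self' E; rewrite E eqxx in sv.
Qed.

Lemma max_arg (A : Type) (cand : A -> Prop) (f : A -> nat) (B : nat) (G : Prop) :
  (forall a, cand a -> f a <= B) ->
  (forall a, cand a -> G \/ exists2 b, cand b & f a < f b) ->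
  forall a, cand a -> G.
Proof.
move=> hB step a ca.
suff: forall k a, cand a -> B - f a <= k -> G by apply; [exact: ca | exact: leqnn].
elim=> [|k IH] {ca}a ca hk; case: (step a ca) => // -[b cb lt].
  by have := hB b cb; lia.
by apply: (IH b cb); have := hB b cb; lia.
Qed.

Lemma two_of (T : finType) (S : {set T}) : 1 < #|S| ->
  exists m1 m2, [/\ m1 \in S, m2 \in S & m1 != m2].
Proof.
move=> h; have /card_gt0P [m1 m1S] : 0 < #|S| by apply: ltnW.
have : 0 < #|S :\ m1| by rewrite (cardsD1 m1) m1S in h.
case/card_gt0P => m2; rewrite !inE => /andP[m21 m2S].
by exists m1, m2; rewrite eq_sym.
Qed.

Lemma three_of (T : finType) (S : {set T}) : 2 < #|S| ->
  exists m1 m2 m3, [/\ m1 \in S, m2 \in S, m3 \in S & [/\ m1 != m2, m1 != m3 & m2 != m3]].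
Proof.
move=> h; have /card_gt0P [m1 m1S] : 0 < #|S| by apply: ltnW; apply: ltnW.
have : 1 < #|S :\ m1| by rewrite (cardsD1 m1) m1S in h.
case/two_of => m2 [m3 []]; rewrite !inE => /andP[m21 m2S] /andP[m31 m3S] m23.
by exists m1, m2, m3; rewrite eq_sym m21 eq_sym m31.
Qed.

Lemma att (P : pred X) q : P q ->
  (exists w1 w2, [/\ P w1, P w2, w1 != q, w2 != q & w1 != w2]) ->
  exists p, (forall w, P w -> w != q -> sep_at e p (phi q) (phi w)) /\
     (exists w1 w2, [/\ P w1, P w2, w1 != q, w2 != q & sep_at e p (phi w1) (phi w2)]).
Proof.
move=> Pq [w1 [w2 [P1 P2 n1 n2 n12]]].
pose cand p := forall w, P w -> w != q -> sep_at e p (phi q) (phi w).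
have [m Hm] := leaf_nbr (codom_f phi q).
have qm : phi q != m by apply/eqP => E; move: (Hm m); rewrite eqxx -{1}E eirr.
have cm : cand m.
  move=> w Pw wq; rewrite /sep_at qm /=.
  have nsc : ~~ sc m (phi q) (phi w).
    by apply/negP => /(leaf_iso Hm) /phi_inj E; rewrite E eqxx in wq.
  rewrite nsc andbT; apply/eqP => wm.
  have [m' Hm'] : exists m', forall y, e m y = (y == m').
    by apply: leaf_nbr; rewrite -wm codom_f.
  have m'q : m' = phi q by apply/eqP; rewrite eq_sym -Hm' esym Hm.
  have all2 : forall t, (t == m) || (t == phi q).
    move=> t; case: (eqVneq t m) => //= tm.
    have [n en sn] := nbr tm; rewrite Hm' m'q in en; rewrite (eqP en) in sn.
    by apply/eqP; apply: (leaf_iso Hm); rewrite sc_sym.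
  have := all2 (phi w1); have := all2 (phi w2).
  rewrite -wm !(inj_eq phi_inj) (negbTE n1) (negbTE n2) !orbF => /eqP e2 /eqP e1.
  by rewrite e1 e2 eqxx in n12.
refine (@max_arg V cand (fun p => #|Cs p (phi q)|) #|V| _ _ _ m cm).
  by move=> p _; apply: max_card.
move=> p cp.
case: (boolP [exists a, exists b, [&& P a, P b, a != q, b != q & sep_at e p (phi a) (phi b)]]).
  case/existsP => a /existsP [b /and5P [Pa Pb aq bq sab]].
  by left; exists p; split => //; exists a, b; split.
move=> hno; right.
have pw : forall w, P w -> w != q -> phi w != p by move=> w Pw wq; case/and3P: (cp w Pw wq).
have pq : phi q != p by case/and3P: (cp w1 P1 n1).
have allsc : forall w, P w -> w != q -> sc p (phi w1) (phi w).
  move=> w Pw wq; apply/negPn/negP => ns; move/negP: hno; apply; apply/existsP; exists w1.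
  by apply/existsP; exists w; rewrite P1 Pw n1 wq /sep_at pw // pw.
have [n en sn] := nbr (pw w1 P1 n1).
have np : n != p by apply/eqP => E; move: en; rewrite E eirr.
have nsq : ~~ sc p (phi q) n.
  apply/negP => h; case/and3P: (cp w1 P1 n1) => _ _ /negP; apply; apply: sc_trans h _.
  by rewrite sc_sym.
have [sub hp] := nest np pq nsq.
exists n; last exact: bigger np pq nsq.
move=> w Pw wq.
have swn : sc p (phi w) n by apply: sc_trans _ sn; rewrite sc_sym; apply: allsc.
apply/and3P; split.
- by apply/eqP => E; move: nsq; rewrite -E sc_refl.
- apply/eqP => wn.
  have [m' Hm'] : exists m', forall y, e n y = (y == m').
    by apply: leaf_nbr; rewrite -wn codom_f.
  have m'p : m' = p by apply/eqP; rewrite eq_sym -Hm' esym.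
  rewrite m'p in Hm'.
  have e1 : phi w1 = n by apply: (leaf_iso Hm'); rewrite sc_sym.
  have e2 : phi w2 = n.
    by apply: (leaf_iso Hm'); apply: sc_trans _ (allsc _ P2 n2); rewrite sc_sym.
  by move: n12; rewrite -(inj_eq phi_inj) e1 e2 eqxx.
- apply/negP => h.
  have h1 : sc n (phi w) p by apply: sc_trans hp; rewrite sc_sym.
  exact: (ac en h1 swn).
Qed.

Lemma nbrs_sep v n1 n2 : e v n1 -> e v n2 -> n1 != n2 -> ~~ sc v n1 n2.
Proof.
move=> e1 e2 n12; apply/negP => h; apply: (@ac v n1 n2 e1).
  apply: sc_edge; first by rewrite esym.
    by rewrite eq_sym.
  by apply/eqP => E; move: e1; rewrite E eirr.
by rewrite sc_sym.
Qed.

Lemma leaf_in v n : e v n -> exists x, sc v n (phi x).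
Proof.
move=> evn.
pose cand t := t != v /\ sc v n t.
have nv : n != v by apply/eqP => E; move: evn; rewrite E eirr.
refine (@max_arg V cand (fun t => #|Cs t v|) #|V| _ _ _ n (conj nv (sc_refl _ _))).
  by move=> t _; apply: max_card.
move=> t [tv snt].
case: (boolP (t \in codom phi)) => [/codomP [x E]|tint]; first by left; exists x; rewrite -E.
right.
have step2 : forall m, e t m -> ~~ sc t m v -> exists2 b, cand b & #|Cs t v| < #|Cs b v|.
  move=> m etm hm.
  have mt : m != t by apply/eqP => E; move: etm; rewrite E eirr.
  have mv : m != v by apply/eqP => E; move: hm; rewrite E sc_refl.
  exists m; first by split => //; apply: sc_trans snt (sc_edge etm tv mv).
  by apply: bigger => //; [rewrite eq_sym | rewrite sc_sym].
have d3 := int_deg tint; rewrite /deg in d3.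
have [m1 [m2 [h1 h2 m12]]] : exists m1 m2, [/\ m1 \in [set y | e t y], m2 \in [set y | e t y] & m1 != m2].
  by apply: two_of; rewrite d3.
rewrite !inE in h1 h2.
have : ~~ sc t m1 v || ~~ sc t m2 v.
  rewrite -negb_and; apply/negP => /andP[s1 s2].
  move: (nbrs_sep h1 h2 m12); rewrite (sc_trans s1 _) //; by rewrite sc_sym.
by case/orP => hm; [apply: (step2 m1) | apply: (step2 m2)].
Qed.

Lemma sep_from v n1 n2 x1 x2 : e v n1 -> e v n2 -> n1 != n2 ->
  sc v n1 (phi x1) -> sc v n2 (phi x2) -> sep_at e v (phi x1) (phi x2).
Proof.
move=> e1 e2 n12 s1 s2.
have nv : forall n x, e v n -> sc v n (phi x) -> phi x != v.
  move=> n x en sx; apply/eqP => E; rewrite E in sx.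
  by move: en; rewrite (sc_self' sx) eirr.
rewrite /sep_at (nv _ _ e1 s1) (nv _ _ e2 s2) /=.
apply/negP => h; move: (nbrs_sep e1 e2 n12); apply/negP/negPn.
by apply: sc_trans s1 _; apply: sc_trans h _; rewrite sc_sym.
Qed.

Lemma int_triple v : v \notin codom phi -> exists a b c,
  [/\ sep_at e v (phi a) (phi b), sep_at e v (phi a) (phi c) & sep_at e v (phi b) (phi c)].
Proof.
move=> vint; have d3 := int_deg vint; rewrite /deg in d3.
have [n1 [n2 [n3 [h1 h2 h3 [n12 n13 n23]]]]] : exists m1 m2 m3, [/\ m1 \in [set y | e v y],
   m2 \in [set y | e v y], m3 \in [set y | e v y] & [/\ m1 != m2, m1 != m3 & m2 != m3]].
  by apply: three_of; rewrite d3.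
rewrite !inE in h1 h2 h3.
have [x1 s1] := leaf_in h1; have [x2 s2] := leaf_in h2; have [x3 s3] := leaf_in h3.
by exists x1, x2, x3; split; [apply: (sep_from h1 h2 n12 s1 s2) | apply: (sep_from h1 h3 n13 s1 s3) | apply: (sep_from h2 h3 n23 s2 s3)].
Qed.

Lemma med a b c : a != b -> a != c -> b != c ->
  exists p, [/\ sep_at e p (phi a) (phi b), sep_at e p (phi a) (phi c) & sep_at e p (phi b) (phi c)].
Proof.
move=> ab ac bc.
pose P := [pred w | (w == a) || (w == b) || (w == c)].
have [p [H1 [w1 [w2 [P1 P2 n1 n2 s12]]]]] : exists p, (forall w, P w -> w != a -> sep_at e p (phi a) (phi w)) /\
     (exists w1 w2, [/\ P w1, P w2, w1 != a, w2 != a & sep_at e p (phi w1) (phi w2)]).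
  apply: att; first by rewrite /= eqxx.
  by exists b, c; split => //; rewrite /= ?eqxx ?orbT // eq_sym.
exists p; split.
- by apply: H1; rewrite /= ?eqxx ?orbT // eq_sym.
- by apply: H1; rewrite /= ?eqxx ?orbT // eq_sym.
move: P1 P2 n1 n2 s12; rewrite /= -!orbA.
case/or3P => /eqP -> ; rewrite ?eqxx //; case/or3P => /eqP -> ; rewrite ?eqxx //.
- by move=> _ _ /sep_neq; rewrite eqxx.
- by move=> _ _; rewrite sep_sym.
- by move=> _ _ /sep_neq; rewrite eqxx.
Qed.

Definition sep3 v a b c :=
  [/\ sep_at e v (phi a) (phi b), sep_at e v (phi a) (phi c) & sep_at e v (phi b) (phi c)].

Definition inM (Y : {set X}) v :=
  exists a b c, [/\ a \in Y, b \in Y, c \in Y & sep3 v a b c].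

Lemma inM_nonleaf Y v : inM Y v -> v \notin codom phi.
Proof. by case=> a [b [c [_ _ _ [h _ _]]]]; apply: sep_nonleaf h. Qed.

Lemma phi_neq a b : phi a != phi b -> a != b.
Proof. by apply: contra => /eqP ->. Qed.

Lemma sep3_12 v a b c : sep3 v a b c -> sep3 v b a c.
Proof. by case=> h1 h2 h3; split => //; rewrite sep_sym. Qed.

Lemma sep3_23 v a b c : sep3 v a b c -> sep3 v a c b.
Proof. by case=> h1 h2 h3; split => //; rewrite sep_sym. Qed.

Lemma triple_with v a a1 b1 c1 : sep3 v a1 b1 c1 -> phi a != v ->
  exists b c, [/\ b \in [:: a1; b1; c1], c \in [:: a1; b1; c1] & sep3 v a b c].
Proof.
move=> [h1 h2 h3] av.
have sc' : forall s, sc v (phi a) s -> sc v s (phi a) by move=> s; rewrite sc_sym.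
case/or3P: (in_triple h1 h2 h3 av) => /sc' hs.
- exists b1, c1; rewrite !inE !eqxx ?orbT; split => //.
  by split => //; apply: (sep_sc _ hs av).
- exists a1, c1; rewrite !inE !eqxx ?orbT; split => //.
  by split => //; apply: (sep_sc _ hs av); rewrite // sep_sym.
- exists a1, b1; rewrite !inE !eqxx ?orbT; split => //.
  by split => //; apply: (sep_sc _ hs av); rewrite sep_sym.
Qed.

Lemma in3 (Y : {set X}) a b c z : a \in Y -> b \in Y -> c \in Y -> z \in [:: a; b; c] -> z \in Y.
Proof. by move=> ha hb hc; rewrite !inE => /or3P[]/eqP ->. Qed.

Lemma cherry (Y : {set X}) : 2 < #|Y| -> exists x y v, [/\ x \in Y, y \in Y, x != y & inM Y v] /\
   [/\ (forall w, w \in Y -> w != x -> sep_at e v (phi x) (phi w)),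
       (forall w, w \in Y -> w != y -> sep_at e v (phi y) (phi w)) &
       (forall u, inM Y u -> u != v -> sc u (phi x) (phi y))].
Proof.
move=> hY.
have [a0 [b0 [c0 [ha0 hb0 hc0 [ab0 ac0 bc0]]]]] := three_of hY.
have [v0 s0] := med ab0 ac0 bc0.
pose cand (z : V * X) := inM Y z.1 /\ z.2 \in Y.
have cnd0 : cand (v0, a0) by split => //; exists a0, b0, c0.
refine (@max_arg _ cand (fun z => #|Cs z.1 (phi z.2)|) #|V| _ _ _ _ cnd0).
  by move=> z _; apply: max_card.
move=> [v a] [/= vM aY].
have vnl := inM_nonleaf vM.
have av : phi a != v by apply/eqP => E; move: vnl; rewrite -E codom_f.
have wv : forall w, phi w != v by move=> w; apply/eqP => E; move: vnl; rewrite -E codom_f.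
have [b [c [hb hc [sab sac sbc]]]] : exists b c, [/\ b \in Y, c \in Y & sep3 v a b c].
  case: vM => a1 [b1 [c1 [h1 h2 h3 s1]]].
  have [b [c [hb hc s]]] := triple_with s1 av.
  by exists b, c; split => //; apply: (in3 h1 h2 h3).
pose sgl z := [forall w, (w \in Y) ==> (w != z) ==> sep_at e v (phi z) (phi w)].
have sglP : forall z, sgl z -> forall w, w \in Y -> w != z -> sep_at e v (phi z) (phi w).
  by move=> z /forallP H w wY wz; move: (H w); rewrite wY wz.
case: (boolP (sgl b && sgl c)) => [/andP[sb s_c]|].
  left; exists b, c, v; split; first split => //.
  - by apply: phi_neq; exact: (sep_neq sbc).
  split; [exact: sglP | exact: sglP | ].
  move=> u uM uv; apply/negPn/negP => nbc.
  have key : forall z, z \in Y -> sgl z -> sc v (phi z) u -> False.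
    move=> z zY hz szu.
    have all : forall w, w \in Y -> w != z -> sc u (phi w) v.
      move=> w wY wz; have hs := sglP z hz w wY wz.
      have nwu : ~~ sc v (phi w) u by apply/negP => h; apply: (two_same hs szu h).
      by have [_ h] := nest uv (wv w) nwu.
    case: uM => a' [b' [c' [ha' hb' hc' [s1 s2 s3]]]].
    have nz : forall s t, sep_at e u (phi s) (phi t) -> s == z -> t != z.
      by move=> s t /sep_neq st /eqP sz; rewrite -sz; apply: phi_neq; rewrite eq_sym.
    case: (eqVneq a' z) => [az|az].
      have az' : a' == z by apply/eqP.
      exact: (two_same s3 (all b' hb' (nz a' b' s1 az')) (all c' hc' (nz a' c' s2 az'))).
    case: (eqVneq b' z) => [bz|bz].
      have bz' : b' == z by apply/eqP.
      exact: (two_same s2 (all a' ha' az) (all c' hc' (nz b' c' s3 bz'))).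
    exact: (two_same s1 (all a' ha' az) (all b' hb' bz)).
  case: (boolP (sc v (phi b) u)) => [|nbu]; first exact: key.
  case: (boolP (sc v (phi c) u)) => [|ncu]; first exact: key.
  have [_ h1] := nest uv (wv b) nbu; have [_ h2] := nest uv (wv c) ncu.
  by move/negP: nbc; apply; apply: sc_trans h1 _; rewrite sc_sym.
have grow : forall z, z \in Y -> sep_at e v (phi a) (phi z) -> ~~ sgl z ->
    exists2 z', cand z' & #|Cs v (phi a)| < #|Cs z'.1 (phi z'.2)|.
  move=> z zY saz /forallPn [w]; rewrite negb_imply => /andP[wY]; rewrite negb_imply.
  case/andP => wz nsw.
  have szw : sc v (phi z) (phi w) by apply/negPn; move: nsw; rewrite /sep_at (wv z) (wv w).
  have az : a != z by apply: phi_neq; apply: (sep_neq saz).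
  have aw : a != w.
    by apply/eqP => E; rewrite -E in szw; case/and3P: saz => _ _; rewrite sc_sym szw.
  have zw : z != w by rewrite eq_sym.
  have [p [pa pz pw]] := med az aw zw.
  have pv : p != v.
    by apply/eqP => E; rewrite E in pw; case/and3P: pw => _ _; rewrite szw.
  exists (p, a); first by split => //=; exists a, z, w.
  apply: bigger => //=.
  apply/negP => hap.
  have nzp : ~~ sc v (phi z) p by apply/negP => h; apply: (two_same saz hap h).
  have [sub _] := nest pv (wv z) nzp.
  by case/and3P: pw => _ _; rewrite sub.
rewrite negb_and => /orP[nb|nc]; right; [apply: (grow b) | apply: (grow c)] => //.
Qed.

Lemma pairC (a b : X) : [set a; b] = [set b; a].
Proof. exact: setUC. Qed.

Lemma pair_neq (q s t : X) : s != t -> q != s -> [set q; s] != [set q; t].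
Proof.
move=> st qs; apply/eqP => E.
have : s \in [set q; t] by rewrite -E !inE eqxx orbT.
by rewrite !inE eq_sym (negbTE qs) (negbTE st).
Qed.

Lemma pair_inj (q s t : X) : q != s -> [set q; s] = [set q; t] -> s = t.
Proof.
move=> qs E; have : s \in [set q; t] by rewrite -E !inE eqxx orbT.
by rewrite !inE eq_sym (negbTE qs) => /eqP.
Qed.

Lemma pair_eq (a b y q : X) : a != b -> y \in [set a; b] -> q \in [set a; b] -> y != q ->
  [set a; b] = [set y; q].
Proof.
move=> ab; rewrite !inE => /orP[]/eqP -> /orP[]/eqP -> //; rewrite ?eqxx //.
by move=> _; rewrite pairC.
Qed.

Lemma suppP Tc a b c v : supports e phi Tc a b c v <->
  sep3 v a b c /\ [/\ [set a; b] \in Tc, [set a; c] \in Tc & [set b; c] \in Tc].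
Proof.
rewrite /supports; split.
  by case/and5P => h1 h2 h3 h4 /andP[h5 h6].
by case=> [[h1 h2 h3] [h4 h5 h6]]; apply/and5P; split => //; apply/andP.
Qed.

Lemma supp12 Tc a b c v : supports e phi Tc a b c v -> supports e phi Tc b a c v.
Proof.
case/suppP => s [h4 h5 h6]; apply/suppP; split; first exact: sep3_12.
by rewrite pairC.
Qed.

Lemma supp23 Tc a b c v : supports e phi Tc a b c v -> supports e phi Tc a c b v.
Proof.
case/suppP => s [h4 h5 h6]; apply/suppP; split; first exact: sep3_23.
by split => //; rewrite pairC.
Qed.

Lemma supp_mono (Tc1 Tc2 : {set {set X}}) a b c v : Tc1 \subset Tc2 ->
  supports e phi Tc1 a b c v -> supports e phi Tc2 a b c v.
Proof.
move=> /subsetP sub /suppP [s [h4 h5 h6]]; apply/suppP; split => //.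
by split; apply: sub.
Qed.

Lemma supp_first Tc a b c v x : supports e phi Tc a b c v -> x \in [:: a; b; c] ->
  exists b' c', [/\ supports e phi Tc x b' c' v, b' \in [:: a; b; c] & c' \in [:: a; b; c]].
Proof.
move=> h; rewrite !inE => /or3P[]/eqP ->.
- by exists b, c; rewrite !inE !eqxx ?orbT.
- by exists a, c; rewrite !inE !eqxx ?orbT; split => //; apply: supp12.
- by exists a, b; rewrite !inE !eqxx ?orbT; split => //; apply: supp12; apply: supp23.
Qed.

Lemma sep3_first v a b c x : sep3 v a b c -> x \in [:: a; b; c] ->
  exists b' c', [/\ sep3 v x b' c', b' \in [:: a; b; c] & c' \in [:: a; b; c]].
Proof.
move=> h; rewrite !inE => /or3P[]/eqP ->.
- by exists b, c; rewrite !inE !eqxx ?orbT.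
- by exists a, c; rewrite !inE !eqxx ?orbT; split => //; apply: sep3_12.
- by exists a, b; rewrite !inE !eqxx ?orbT; split => //; apply: sep3_12; apply: sep3_23.
Qed.

Lemma supp_contains p q a b c : sep3 p a b c ->
  (forall w, w \in [:: a; b; c] -> w != q -> sep_at e p (phi q) (phi w)) ->
  q \in [:: a; b; c].
Proof.
move=> [h1 h2 h3] H; apply/negPn/negP => nq.
have hw : forall w, w \in [:: a; b; c] -> sep_at e p (phi q) (phi w).
  by move=> w hw; apply: H => //; apply/eqP => E; move: nq; rewrite -E hw.
have ha := hw a; have hb := hw b; have hc := hw c.
rewrite !inE !eqxx ?orbT in ha hb hc.
have qp : phi q != p by case/and3P: (ha isT).
case/or3P: (in_triple h1 h2 h3 qp).
- by case/and3P: (ha isT) => _ _ /negP.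
- by case/and3P: (hb isT) => _ _ /negP.
- by case/and3P: (hc isT) => _ _ /negP.
Qed.

Definition pairs_in (Y : {set X}) (Tc : {set {set X}}) :=
  forall p, p \in Tc -> exists a b, [/\ a \in Y, b \in Y, a != b & p = [set a; b]].

Definition Ycover (Y : {set X}) (Tc : {set {set X}}) := pairs_in Y Tc /\
  forall v, inM Y v -> exists a b c, [/\ a \in Y, b \in Y, c \in Y & supports e phi Tc a b c v].

Lemma inM_sub (Y1 Y2 : {set X}) u : Y1 \subset Y2 -> inM Y1 u -> inM Y2 u.
Proof.
move=> /subsetP sub [a [b [c [ha hb hc s]]]].
by exists a, b, c; split => //; apply: sub.
Qed.

Lemma att_Y (Y : {set X}) q : q \in Y -> 2 < #|Y| ->
  exists p, inM Y p /\ forall w, w \in Y -> w != q -> sep_at e p (phi q) (phi w).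
Proof.
move=> qY hY.
have : 1 < #|Y :\ q| by rewrite (cardsD1 q) qY in hY.
case/two_of => w1 [w2 []]; rewrite !inE => /andP[n1 h1] /andP[n2 h2] n12.
have [p [H [a [b [Pa Pb aq bq sab]]]]] := @att [pred w | w \in Y] q qY
  (ex_intro _ w1 (ex_intro _ w2 (And5 h1 h2 n1 n2 n12))).
exists p; split => //.
by exists q, a, b; split => //; split => //; apply: H.
Qed.

Lemma cover_att (Y : {set X}) Tc q : Ycover Y Tc -> q \in Y -> 2 < #|Y| ->
  exists p s t, [/\ s \in Y, t \in Y, supports e phi Tc q s t p &
     forall w, w \in Y -> w != q -> sep_at e p (phi q) (phi w)].
Proof.
move=> [_ cov] qY hY.
have [p [pM H]] := att_Y qY hY.
have [a [b [c [ha hb hc hs]]]] := cov p pM.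
have hq : q \in [:: a; b; c].
  have hs3 : sep3 p a b c by case/suppP: hs.
  apply: (supp_contains hs3).
  by move=> w hw wq; apply: H => //; apply: (in3 ha hb hc).
have [s [t [hs' sin tin]]] := supp_first hs hq.
by exists p, s, t; split => //; apply: (in3 ha hb hc).
Qed.

Definition mlt (Tc : {set {set X}}) q := #|[set p in Tc | q \in p]|.

Lemma mult_ge2 (Y : {set X}) Tc q : Ycover Y Tc -> q \in Y -> 2 < #|Y| -> 1 < mlt Tc q.
Proof.
move=> cov qY hY.
have [p [s [t [sY tY hs _]]]] := cover_att cov qY hY.
case/suppP: hs => [[sqs sqt sst] [h1 h2 _]].
have st : s != t by apply: phi_neq; exact: (sep_neq sst).
have qs : q != s by apply: phi_neq; exact: (sep_neq sqs).
have : #|[set [set q; s]; [set q; t]]| <= mlt Tc q.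
  apply: subset_leq_card; apply/subsetP => z; rewrite !inE.
  by case/orP => /eqP ->; rewrite ?h1 ?h2 !inE eqxx.
by rewrite cards2 (pair_neq st qs).
Qed.

Definition is_cherry (Y : {set X}) x y v :=
  [/\ x \in Y, y \in Y, x != y & inM Y v] /\
  [/\ (forall w, w \in Y -> w != x -> sep_at e v (phi x) (phi w)),
      (forall w, w \in Y -> w != y -> sep_at e v (phi y) (phi w)) &
      (forall u, inM Y u -> u != v -> sc u (phi x) (phi y))].

Lemma cherry' (Y : {set X}) : 2 < #|Y| -> exists x y v, is_cherry Y x y v.
Proof. exact: cherry. Qed.

Definition Fm (x y : X) (p : {set X}) : {set X} := if y \in p then x |: (p :\ y) else p.

Lemma Fm_y x y q : q != y -> Fm x y [set y; q] = [set x; q].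
Proof.
move=> qy; rewrite /Fm !inE eqxx /=; congr (_ |: _); apply/setP => w; rewrite !inE.
case: (eqVneq w y) => [->|wy] /=; first by rewrite eq_sym (negbTE qy).
by [].
Qed.

Lemma Fm_noy x y (p : {set X}) : y \notin p -> Fm x y p = p.
Proof. by move=> h; rewrite /Fm (negbTE h). Qed.

Lemma notin_pair (y a b : X) : y != a -> y != b -> y \notin [set a; b].
Proof. by move=> ya yb; rewrite !inE negb_or ya yb. Qed.

Lemma imset_collide (T U : finType) (f : T -> U) (S : {set T}) a b :
  a \in S -> b \in S -> a != b -> f a = f b -> #|f @: S| < #|S|.
Proof.
move=> aS bS ab fab.
have sub : f @: S \subset f @: (S :\ a).
  apply/subsetP => _ /imsetP [s sS ->].
  case: (eqVneq s a) => [->|sa]; last by apply: imset_f; rewrite !inE sa.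
  by rewrite fab; apply: imset_f; rewrite !inE eq_sym ab.
apply: (leq_ltn_trans (subset_leq_card sub)).
apply: (leq_ltn_trans (leq_imset_card _ _)).
by rewrite (cardsD1 a S) aS.
Qed.

Lemma imset_collide2 (T U : finType) (f : T -> U) (S : {set T}) a1 b1 a2 b2 :
  a1 \in S -> b1 \in S -> a2 \in S -> b2 \in S -> a1 != a2 ->
  b1 != a1 -> b1 != a2 -> b2 != a1 -> b2 != a2 -> f a1 = f b1 -> f a2 = f b2 ->
  #|f @: S| + 2 <= #|S|.
Proof.
move=> h1 h2 h3 h4 n12 n1 n2 n3 n4 f1 f2.
have sub : f @: S \subset f @: (S :\ a1 :\ a2).
  apply/subsetP => _ /imsetP [s sS ->].
  case: (eqVneq s a1) => [->|s1].
    by rewrite f1; apply: imset_f; rewrite !inE n1 n2 h2.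
  case: (eqVneq s a2) => [->|s2].
    by rewrite f2; apply: imset_f; rewrite !inE n3 n4 h4.
  by apply: imset_f; rewrite !inE s1 s2.
have := leq_trans (subset_leq_card sub) (leq_imset_card _ _).
have n21 : a2 != a1 by rewrite eq_sym.
have c1 : #|S| = #|S :\ a1|.+1 by rewrite (cardsD1 a1 S) h1.
have c2 : #|S :\ a1| = #|S :\ a1 :\ a2|.+1.
  by rewrite (cardsD1 a2 (S :\ a1)) !inE n21 h3.
by rewrite c1 c2 addn2 ltnS ltnS.
Qed.

Section Reduction.
Variables (Y : {set X}) (Tc : {set {set X}}) (x y : X) (v : V).
Hypothesis chY : is_cherry Y x y v.
Hypothesis cov : Ycover Y Tc.

Local Notation TcR := (Fm x y @: (Tc :\ [set x; y])).

Lemma cr0 : exists z, [/\ z \in Y, z != x, z != y &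
  [/\ [set x; y] \in Tc, [set x; z] \in Tc & [set y; z] \in Tc]].
Proof.
case: chY => [[hx hy xy vM] [Hx Hy Hu]].
case: cov => _ cv.
have [a [b [c [ha hb hc hs]]]] := cv v vM.
have hs3 : sep3 v a b c by case/suppP: hs.
have hxin : x \in [:: a; b; c].
  by apply: (supp_contains hs3) => w hw wx; apply: Hx => //; apply: (in3 ha hb hc).
have [b' [c' [hs' hb' hc']]] := supp_first hs hxin.
have hs3' : sep3 v x b' c' by case/suppP: hs'.
have yx : y != x by rewrite eq_sym.
have hyin : y \in [:: x; b'; c'].
  apply: (supp_contains hs3') => w hw wy; apply: Hy => //.
  exact: (in3 hx (in3 ha hb hc hb') (in3 ha hb hc hc') hw).
rewrite !inE (negbTE yx) /= in hyin.
case/suppP: hs' => [[s1 s2 s3] [p1 p2 p3]].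
case/orP: hyin => /eqP E.
- rewrite -E in s1 s3 p1 p3.
  exists c'; split => //; first exact: (in3 ha hb hc hc').
  + by apply: phi_neq; rewrite eq_sym; exact: (sep_neq s2).
  + by apply: phi_neq; rewrite eq_sym; exact: (sep_neq s3).
- rewrite -E in s2 s3 p2 p3.
  exists b'; split => //; first exact: (in3 ha hb hc hb').
  + by apply: phi_neq; rewrite eq_sym; exact: (sep_neq s1).
  + by apply: phi_neq; exact: (sep_neq s3).
  + by split => //; rewrite pairC.
Qed.

Lemma inS_noy (p : {set X}) : p \in Tc -> y \notin p -> p \in Tc :\ [set x; y] /\ Fm x y p = p.
Proof.
move=> hp hny; split; last exact: Fm_noy.
rewrite !inE hp andbT; apply/eqP => E; move: hny; rewrite E !inE eqxx orbT //.
Qed.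

Lemma inS_y q : [set y; q] \in Tc -> q != x -> q != y ->
  [set y; q] \in Tc :\ [set x; y] /\ Fm x y [set y; q] = [set x; q].
Proof.
move=> hp qx qy; split; last exact: Fm_y.
rewrite !inE hp andbT; apply/eqP => E.
have : q \in [set x; y] by rewrite -E !inE eqxx orbT.
by rewrite !inE (negbTE qx) (negbTE qy).
Qed.

Lemma cr_size : #|TcR| + 2 <= #|Tc|.
Proof.
case: chY => [[hx hy xy vM] _].
have [z [zY zx zy [pxy pxz pyz]]] := cr0.
have [a1S fa1] := inS_y pyz zx zy.
have yz : y != z by rewrite eq_sym.
have yx : y != x by rewrite eq_sym.
have [b1S fb1] := inS_noy pxz (notin_pair yx yz).
have a1b1 : [set y; z] != [set x; z].
  by apply/eqP => E; have := notin_pair yx yz; rewrite -E !inE eqxx.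
have lt := imset_collide a1S b1S a1b1 (etrans fa1 (Logic.eq_sym fb1)).
have c1 : #|Tc| = #|Tc :\ [set x; y]|.+1 by rewrite (cardsD1 [set x; y] Tc) pxy.
by rewrite c1 addn2 ltnS.
Qed.

Lemma cr_cover : Ycover (Y :\ y) TcR.
Proof.
case: chY => [[hx hy xy vM] [Hx Hy Hu]].
case: cov => pcov cv.
have yx : y != x by rewrite eq_sym.
split.
  move=> _ /imsetP [p pS ->]; move: pS; rewrite !inE => /andP[pxy pT].
  have [a [b [ha hb ab E]]] := pcov p pT; rewrite E in pxy *.
  case: (boolP (y \in [set a; b])) => hyin.
    rewrite !inE in hyin; case/orP: hyin => /eqP Ey.
    + rewrite -Ey in ab pxy *; rewrite Fm_y; last by rewrite eq_sym.
      have bY : b \in Y :\ y by rewrite in_setD1 hb andbT eq_sym.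
      have xY : x \in Y :\ y by rewrite in_setD1 xy hx.
      have xb : x != b by apply/eqP => Ex; rewrite Ex pairC eqxx in pxy.
      by exists x, b.
    + rewrite -Ey in ab pxy *; rewrite pairC Fm_y //.
      have aY : a \in Y :\ y by rewrite in_setD1 ha andbT.
      have xY : x \in Y :\ y by rewrite in_setD1 xy hx.
      have xa : x != a by apply/eqP => Ex; rewrite Ex eqxx in pxy.
      by exists x, a.
  rewrite Fm_noy //; exists a, b; split => //; rewrite in_setD1 ?ha ?hb andbT.
    by apply/eqP => Ea; rewrite Ea !inE eqxx in hyin.
  by apply/eqP => Eb; rewrite Eb !inE eqxx orbT in hyin.
move=> u uM.
have uMY : inM Y u by apply: inM_sub uM; apply: subD1set.
have uv : u != v.
  apply/eqP => E; rewrite E in uM; case: uM => a [b [c [ha hb hc hs]]].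
  have : y \in [:: a; b; c].
    apply: (supp_contains hs) => w hw wy; apply: Hy => //.
    by move: (in3 ha hb hc hw); rewrite !inE => /andP[].
  by rewrite !inE => /or3P[]/eqP Ey; [move: ha | move: hb | move: hc];
    rewrite -Ey !inE eqxx.
have [a [b [c [ha hb hc hs]]]] := cv u uMY.
case: (boolP (y \in [:: a; b; c])) => hyin.
  have [b' [c' [hs' hb' hc']]] := supp_first hs hyin.
  case/suppP: hs' => [[s1 s2 s3] [p1 p2 p3]].
  have hxy : sc u (phi y) (phi x) by rewrite sc_sym; apply: Hu.
  have xu : phi x != u.
    by apply/eqP => E; move: (inM_nonleaf uMY); rewrite -E codom_f.
  have s1' := sep_sc s1 hxy xu; have s2' := sep_sc s2 hxy xu.
  have b'y : b' != y by apply: phi_neq; rewrite eq_sym; exact: (sep_neq s1).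
  have c'y : c' != y by apply: phi_neq; rewrite eq_sym; exact: (sep_neq s2).
  have b'x : b' != x by apply: phi_neq; rewrite eq_sym; exact: (sep_neq s1').
  have c'x : c' != x by apply: phi_neq; rewrite eq_sym; exact: (sep_neq s2').
  have b'Y := in3 ha hb hc hb'; have c'Y := in3 ha hb hc hc'.
  have xY' : x \in Y :\ y by rewrite in_setD1 xy hx.
  have b'Y' : b' \in Y :\ y by rewrite in_setD1 b'y b'Y.
  have c'Y' : c' \in Y :\ y by rewrite in_setD1 c'y c'Y.
  exists x, b', c'; split => //.
  have [q1 f1] := inS_y p1 b'x b'y; have [q2 f2] := inS_y p2 c'x c'y.
  have yb' : y != b' by rewrite eq_sym.
  have yc' : y != c' by rewrite eq_sym.
  have [q3 f3] := inS_noy p3 (notin_pair yb' yc').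
  apply/suppP; split; first by split.
  split.
  - by rewrite -f1; apply: imset_f.
  - by rewrite -f2; apply: imset_f.
  - by rewrite -f3; apply: imset_f.
rewrite !inE !negb_or in hyin; case/and3P: hyin => ya yb yc.
have aY' : a \in Y :\ y by rewrite in_setD1 eq_sym ya ha.
have bY' : b \in Y :\ y by rewrite in_setD1 eq_sym yb hb.
have cY' : c \in Y :\ y by rewrite in_setD1 eq_sym yc hc.
exists a, b, c; split => //.
case/suppP: hs => [s3 [p1 p2 p3]]; apply/suppP; split => //.
have [q1 f1] := inS_noy p1 (notin_pair ya yb).
have [q2 f2] := inS_noy p2 (notin_pair ya yc).
have [q3 f3] := inS_noy p3 (notin_pair yb yc).
split.
- by rewrite -f1; apply: imset_f.
- by rewrite -f2; apply: imset_f.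
- by rewrite -f3; apply: imset_f.
Qed.

End Reduction.

Lemma ub_step (Y : {set X}) x y v Tc' : is_cherry Y x y v -> 2 < #|Y :\ y| ->
  Ycover (Y :\ y) Tc' -> exists Tc, Ycover Y Tc /\ #|Tc| <= #|Tc'| + 2.
Proof.
move=> chY hY' cov'.
case: (chY) => [[hx hy xy vM] [Hx Hy Hu]].
have xY' : x \in Y :\ y by rewrite in_setD1 xy hx.
have [p [s [t [sY tY hs _]]]] := cover_att cov' xY' hY'.
case/suppP: hs => [[sxs _ _] [pxs _ _]].
have sx : s != x by apply: phi_neq; rewrite eq_sym; exact: (sep_neq sxs).
move: sY; rewrite in_setD1 => /andP[sy sY].
have yx : y != x by rewrite eq_sym.
have ys : y != s by rewrite eq_sym.
exists ([set x; y] |: ([set y; s] |: Tc')); split; last first.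
  rewrite !cardsU1.
  apply: (leq_trans (leq_add (leq_b1 _) (leq_add (leq_b1 _) (leqnn _)))).
  by rewrite add1n add1n addn2.
split.
  move=> q; rewrite !in_setU1 => /orP[/eqP->|/orP[/eqP->|qT]].
  - by exists x, y.
  - by exists y, s.
  - have [a [b [ha hb ab ->]]] := cov'.1 q qT.
    move: ha hb; rewrite !in_setD1 => /andP[_ ha] /andP[_ hb].
    by exists a, b.
move=> u uM; case: (eqVneq u v) => [->|uv].
  exists x, y, s; split => //; apply/suppP; split.
    by split; [apply: Hx | apply: Hx | apply: Hy].
  by split; rewrite !in_setU1 ?eqxx ?pxs ?orbT.
have uM' : inM (Y :\ y) u.
  case: uM => a [b [c [ha hb hc hs]]].
  case: (boolP (y \in [:: a; b; c])) => hyin.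
    have [b' [c' [[s1 s2 s3] hb' hc']]] := sep3_first hs hyin.
    have hxy : sc u (phi y) (phi x) by rewrite sc_sym; apply: Hu => //; exists a, b, c.
    have xu : phi x != u.
      apply/eqP => E; have : inM Y u by exists a, b, c.
      by move/inM_nonleaf; rewrite -E codom_f.
    have s1' := sep_sc s1 hxy xu; have s2' := sep_sc s2 hxy xu.
    have b'y : b' != y by apply: phi_neq; rewrite eq_sym; exact: (sep_neq s1).
    have c'y : c' != y by apply: phi_neq; rewrite eq_sym; exact: (sep_neq s2).
    exists x, b', c'; split => //; rewrite in_setD1 ?b'y ?c'y //.
    - exact: (in3 ha hb hc hb').
    - exact: (in3 ha hb hc hc').
  rewrite !inE !negb_or in hyin; case/and3P: hyin => ya yb yc.
  by exists a, b, c; split => //; rewrite in_setD1 ?ha ?hb ?hc andbT eq_sym.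
have [a [b [c [ha hb hc hs]]]] := cov'.2 u uM'.
move: ha hb hc; rewrite !in_setD1 => /andP[_ ha] /andP[_ hb] /andP[_ hc].
exists a, b, c; split => //; apply: supp_mono hs.
by apply/subsetP => q qT; rewrite !in_setU1 qT !orbT.
Qed.

Lemma in_three (Y : {set X}) a b c w : #|Y| = 3 -> a \in Y -> b \in Y -> c \in Y ->
  a != b -> a != c -> b != c -> w \in Y -> w \in [:: a; b; c].
Proof.
move=> hY ha hb hc ab ac bc wY; apply/negPn/negP; rewrite !inE !negb_or => /and3P[wa wb wc].
have : #|[:: a; b; c; w]| <= #|Y|.
  by apply: subset_leq_card; apply/subsetP => z; rewrite !inE => /or4P[]/eqP ->.
by rewrite card4 ?hY // eq_sym.
Qed.

Lemma ub n (Y : {set X}) : #|Y| = n.+3 -> exists Tc, Ycover Y Tc /\ #|Tc| + 3 <= 2 * #|Y|.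
Proof.
elim: n Y => [|n IH] Y hY.
  have h3 : 2 < #|Y| by rewrite hY.
  have [a [b [c [ha hb hc [ab ac bc]]]]] := three_of h3.
  pose Tc := [set p in [:: [set a; b]; [set a; c]; [set b; c]]].
  have pair3 : forall s t, s \in Y -> t \in Y -> s != t -> [set s; t] \in Tc.
    move=> s t sY tY st; rewrite /Tc inE.
    move: (in_three hY ha hb hc ab ac bc sY) (in_three hY ha hb hc ab ac bc tY).
    rewrite !inE => /or3P[]/eqP Es /or3P[]/eqP Et; rewrite Es Et in st *; move: st;
      rewrite ?eqxx //= => _; rewrite ?(pairC b a) ?(pairC c a) ?(pairC c b) ?eqxx ?orbT //.
  exists Tc; split; last first.
    rewrite hY; apply: (@leq_trans (3 + 3)) => //; rewrite leq_add2r.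
    by rewrite /Tc cardsE; apply: card_size.
  split.
    move=> p; rewrite /Tc inE !inE => /or3P[]/eqP ->.
    - by exists a, b.
    - by exists a, c.
    - by exists b, c.
  move=> u [a' [b' [c' [ha' hb' hc' [s1 s2 s3]]]]].
  exists a', b', c'; split => //; apply/suppP; split => //.
  by split; apply: pair3 => //; apply: phi_neq; [exact: (sep_neq s1) | exact: (sep_neq s2) | exact: (sep_neq s3)].
have h3 : 2 < #|Y| by rewrite hY.
have [x [y [v chY]]] := cherry' h3.
have yY : y \in Y by case: chY => [[]].
have hY' : #|Y :\ y| = n.+3 by move: hY; rewrite (cardsD1 y Y) yY add1n => -[].
have [Tc' [cov' sz']] := IH _ hY'.
have h3' : 2 < #|Y :\ y| by rewrite hY'.
have [Tc [cov sz]] := ub_step chY h3' cov'.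
exists Tc; split => //; rewrite hY; rewrite hY' in sz'.
clear -sz sz'; lia.
Qed.

Lemma arith_lb a b n : a + 2 <= b -> 2 * n.+3 <= a + 3 -> 2 * n.+4 <= b + 3.
Proof. lia. Qed.

Lemma lb n (Y : {set X}) Tc : #|Y| = n.+3 -> Ycover Y Tc -> 2 * #|Y| <= #|Tc| + 3.
Proof.
elim: n Y Tc => [|n IH] Y Tc hY cov.
  have /card_gt0P [q qY] : 0 < #|Y| by rewrite hY.
  have h3 : 2 < #|Y| by rewrite hY.
  have [p [s [t [sY tY hs _]]]] := cover_att cov qY h3.
  case/suppP: hs => [[sqs sqt sst] [p1 p2 p3]].
  have st : s != t by apply: phi_neq; exact: (sep_neq sst).
  have qs : q != s by apply: phi_neq; exact: (sep_neq sqs).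
  have qt : q != t by apply: phi_neq; exact: (sep_neq sqt).
  have n1 : [set q; s] != [set s; t].
    apply/eqP => E; have : q \in [set s; t] by rewrite -E !inE eqxx.
    by rewrite !inE (negbTE qs) (negbTE qt).
  have n2 : [set q; t] != [set s; t].
    apply/eqP => E; have : q \in [set s; t] by rewrite -E !inE eqxx.
    by rewrite !inE (negbTE qs) (negbTE qt).
  have n0 := pair_neq st qs.
  have : #|[:: [set q; s]; [set q; t]; [set s; t]]| <= #|Tc|.
    by apply: subset_leq_card; apply/subsetP => z; rewrite !inE => /or3P[]/eqP ->.
  have c3 : #|[:: [set q; s]; [set q; t]; [set s; t]]| = 3.
    apply/card_uniqP; rewrite [uniq _]/= !inE !negb_or n0 n1 n2. done.
  by rewrite c3 hY => h; rewrite -[2 * 3]/(3 + 3) leq_add2r.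
have hY3 : 2 < #|Y| by rewrite hY.
have [x [y [v chY]]] := cherry' hY3.
have yY : y \in Y by case: chY => [[]].
have hY' : #|Y :\ y| = n.+3 by move: hY; rewrite (cardsD1 y Y) yY add1n => -[].
have := IH _ _ hY' (cr_cover chY cov).
have := cr_size chY cov.
rewrite hY hY' => h1 h2; exact: (arith_lb h1 h2).
Qed.

Lemma pairY (Y : {set X}) Tc b c : pairs_in Y Tc -> [set b; c] \in Tc -> [/\ b \in Y, c \in Y & b != c].
Proof.
move=> H hbc; have [a' [b' [ha hb ab E]]] := H _ hbc.
have bin : b \in [set a'; b'] by rewrite -E !inE eqxx.
have cin : c \in [set a'; b'] by rewrite -E !inE eqxx orbT.
split.
- by move: bin; rewrite !inE => /orP[]/eqP ->.
- by move: cin; rewrite !inE => /orP[]/eqP ->.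
apply/eqP => bc; rewrite bc setUid in E.
have : a' \in [set c] by rewrite E !inE eqxx.
have : b' \in [set c] by rewrite E !inE eqxx orbT.
by rewrite !inE => /eqP e1 /eqP e2; rewrite e1 e2 eqxx in ab.
Qed.

Lemma mlt_split (Tc : {set {set X}}) q : #|Tc| = #|[set p in Tc | q \notin p]| + mlt Tc q.
Proof.
rewrite /mlt -(cardsID [set p : {set X} | q \in p] Tc) addnC; congr (_ + _);
  by apply: eq_card => p; rewrite !inE; case: (p \in Tc); case: (q \in p).
Qed.

Lemma arith_eq a b n : a + 2 <= b -> 2 * n.+3 <= a + 3 -> b + 3 = 2 * n.+4 -> a + 3 = 2 * n.+3.
Proof. lia. Qed.

Lemma arith_contra a b n : a + 3 <= b -> a + 3 = 2 * n.+3 -> b + 3 = 2 * n.+4 -> False.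
Proof. lia. Qed.

Lemma mainS n (Y : {set X}) Tc : #|Y| = n.+3 -> Ycover Y Tc -> #|Tc| + 3 = 2 * #|Y| ->
  forall b c, [set b; c] \in Tc -> exists q, [/\ q \in Y, q != b, q != c & mlt Tc q = 2].
Proof.
elim: n Y Tc => [|n IH] Y Tc hY cov hsz b c hbc.
  have [bY cY bc] := pairY cov.1 hbc.
  have c1 : #|Y| = #|Y :\ b|.+1 by rewrite (cardsD1 b Y) bY.
  have c2 : #|Y :\ b| = #|Y :\ b :\ c|.+1 by rewrite (cardsD1 c (Y :\ b)) in_setD1 cY andbT eq_sym bc.
  have /card_gt0P [q] : 0 < #|Y :\ b :\ c| by move: hY; rewrite c1 c2 => -[] ->.
  rewrite !in_setD1 => /andP[qc /andP[qb qY]].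
  exists q; split => //.
  have hY3 : 2 < #|Y| by rewrite hY.
  have ge := mult_ge2 cov qY hY3.
  have le : mlt Tc q <= #|Tc :\ [set b; c]|.
    apply: subset_leq_card; apply/subsetP => p; rewrite !inE => /andP[pT qp].
    rewrite pT andbT; apply/eqP => E; move: qp; rewrite E !inE (negbTE qb) (negbTE qc) //.
  have c3 : #|Tc| = #|Tc :\ [set b; c]|.+1 by rewrite (cardsD1 [set b; c] Tc) hbc.
  have E : #|Tc :\ [set b; c]| = 2 by move: hsz; rewrite c3 hY => h; clear -h; lia.
  rewrite E in le.
  by apply/eqP; rewrite eqn_leq le ge.
have hY3 : 2 < #|Y| by rewrite hY.
have [q0 [q0Y m0]] : exists q0, q0 \in Y /\ mlt Tc q0 = 2.
  have [x [y [v chY]]] := cherry' hY3.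
  case: (chY) => [[hx hy xy vM] _].
  have [z [zY zx zy [pxy pxz pyz]]] := cr0 chY cov.
  pose R := Fm x y @: (Tc :\ [set x; y]).
  have covR : Ycover (Y :\ y) R := cr_cover chY cov.
  have szR : #|R| + 2 <= #|Tc| := cr_size chY cov.
  have hY' : #|Y :\ y| = n.+3 by move: hY; rewrite (cardsD1 y Y) hy add1n => -[].
  have lbR := lb hY' covR.
  rewrite hY' in lbR; rewrite hY in hsz.
  have exR : #|R| + 3 = 2 * #|Y :\ y| by rewrite hY'; apply: (arith_eq szR lbR hsz).
  have yx : y != x by rewrite eq_sym.
  have yz : y != z by rewrite eq_sym.
  have xzR : [set x; z] \in R.
    have [h1 h2] := inS_noy x pxz (notin_pair yx yz).
    by rewrite -h2; apply: imset_f.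
  have [q [qY' qx qz m2]] := IH _ _ hY' covR exR _ _ xzR.
  move: qY'; rewrite in_setD1 => /andP[qy qY].
  exists q; split => //.
  have ge := mult_ge2 cov qY hY3.
  have yq : y != q by rewrite eq_sym.
  have noboth : [set y; q] \in Tc -> [set x; q] \in Tc -> False.
    move=> pyq pxq.
    have [a1S fa1] := inS_y pyz zx zy.
    have [b1S fb1] := inS_noy x pxz (notin_pair yx yz).
    have [a2S fa2] := inS_y pyq qx qy.
    have [b2S fb2] := inS_noy x pxq (notin_pair yx yq).
    have nin : forall w, y \notin [set x; w] -> forall w', [set x; w] != [set y; w'].
      by move=> w hw w'; apply/eqP => E; move: hw; rewrite E !inE eqxx.
    have a12 : [set y; z] != [set y; q].
      by apply/eqP => /pair_inj E; rewrite (E yz) eqxx in qz.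
    have := imset_collide2 a1S b1S a2S b2S a12 (nin _ (notin_pair yx yz) _)
      (nin _ (notin_pair yx yz) _) (nin _ (notin_pair yx yq) _) (nin _ (notin_pair yx yq) _)
      (etrans fa1 (Logic.eq_sym fb1)) (etrans fa2 (Logic.eq_sym fb2)).
    have c1 : #|Tc| = #|Tc :\ [set x; y]|.+1 by rewrite (cardsD1 [set x; y] Tc) pxy.
    rewrite -/R => h; have h' : #|R| + 3 <= #|Tc| by rewrite c1 addn3 ltnS -addn2.
    by rewrite hY' in exR; apply: (arith_contra h' exR hsz).
  pose D := [set p in Tc :\ [set x; y] | q \in p].
  have E1 : [set p in Tc | q \in p] = D.
    apply/setP => p; rewrite !inE; case: (boolP (q \in p)) => qp; rewrite ?andbF ?andbT //.
    case: (eqVneq p [set x; y]) => [E|] //=.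
    by move: qp; rewrite E !inE (negbTE qx) (negbTE qy).
  have keyD : forall p, p \in D -> y \in p -> p = [set y; q].
    move=> p; rewrite !inE => /andP[/andP[_ pT] qp] yp.
    have [a' [b' [_ _ ab E]]] := cov.1 p pT; rewrite E in yp qp *.
    exact: (pair_eq ab yp qp yq).
  have inD : forall p, p \in D -> p \in Tc.
    by move=> p; rewrite !inE => /andP[/andP[]].
  have inj : {in D &, injective (Fm x y)}.
    move=> p1 p2 h1 h2 F.
    case: (boolP (y \in p1)) => y1; case: (boolP (y \in p2)) => y2.
    - by rewrite (keyD _ h1 y1) (keyD _ h2 y2).
    - exfalso; rewrite (keyD _ h1 y1) Fm_y // (Fm_noy x y2) in F.
      by apply: noboth; [rewrite -(keyD _ h1 y1); apply: inD | rewrite F; apply: inD].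
    - exfalso; rewrite (keyD _ h2 y2) Fm_y // (Fm_noy x y1) in F.
      by apply: noboth; [rewrite -(keyD _ h2 y2); apply: inD | rewrite -F; apply: inD].
    - by rewrite -(Fm_noy x y1) -(Fm_noy x y2) F.
  have le : mlt Tc q <= mlt R q.
    rewrite /mlt E1 -(card_in_imset inj); apply: subset_leq_card.
    apply/subsetP => _ /imsetP [p hp ->]; rewrite inE; apply/andP; split.
      by apply: imset_f; move: hp; rewrite inE => /andP[].
    case: (boolP (y \in p)) => yp.
      by rewrite (keyD _ hp yp) Fm_y // !inE eqxx orbT.
    by rewrite Fm_noy //; move: hp; rewrite inE => /andP[].
  by apply/eqP; rewrite eqn_leq ge andbT -m2.
have stepB : forall o, [set q0; o] \in Tc -> exists q, [/\ q \in Y, q != q0, q != o & mlt Tc q = 2].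
  move=> o ho.
  have [_ _ q0o] := pairY cov.1 ho.
  have [p [s [t [sY tY hs Hatt]]]] := cover_att cov q0Y hY3.
  have hs' := hs; case/suppP: hs' => [[s1 s2 s3] [ps pt pst]].
  have st : s != t by apply: phi_neq; exact: (sep_neq s3).
  have q0s : q0 != s by apply: phi_neq; exact: (sep_neq s1).
  have q0t : q0 != t by apply: phi_neq; exact: (sep_neq s2).
  have M2 : [set p in Tc | q0 \in p] = [set [set q0; s]; [set q0; t]].
    apply/eqP; rewrite eq_sym eqEcard; apply/andP; split.
      apply/subsetP => p'; rewrite !inE => /orP[]/eqP ->.
      - by rewrite inE ps /= !inE eqxx.
      - by rewrite inE pt /= !inE eqxx.
    have m0' : #|[set p in Tc | q0 \in p]| = 2 := m0.
    by rewrite cards2 (pair_neq st q0s) m0'.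
  have nbr2 : forall w, [set q0; w] \in Tc -> q0 != w -> w = s \/ w = t.
    move=> w hw q0w.
    have : [set q0; w] \in [set p in Tc | q0 \in p] by rewrite inE hw !inE eqxx.
    by rewrite M2 !inE => /orP[]/eqP E; [left | right]; exact: (pair_inj q0w E).
  have os : (o == s) || (o == t) by case: (nbr2 o ho q0o) => ->; rewrite eqxx ?orbT.
  pose Tc2 := [set p in Tc | q0 \notin p].
  have hY' : #|Y :\ q0| = n.+3 by move: hY; rewrite (cardsD1 q0 Y) q0Y add1n => -[].
  have cov2 : Ycover (Y :\ q0) Tc2.
    split.
      move=> p'; rewrite inE => /andP[pT nq].
      have [a [b' [ha hb ab E]]] := cov.1 p' pT.
      rewrite E !inE negb_or in nq; case/andP: nq => nqa nqb.
      have ha' : a \in Y :\ q0 by rewrite in_setD1 ha andbT eq_sym.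
      have hb' : b' \in Y :\ q0 by rewrite in_setD1 hb andbT eq_sym.
      by exists a, b'.
    move=> u uM.
    have uMY : inM Y u by apply: inM_sub uM; apply: subD1set.
    have [a [b' [c' [ha hb hc hsu]]]] := cov.2 u uMY.
    case: (boolP (q0 \in [:: a; b'; c'])) => hq.
      exfalso.
      have [b'' [c'' [hs2 _ _]]] := supp_first hsu hq.
      case/suppP: hs2 => [[u1 u2 u3] [p1 p2 p3]].
      have q0b : q0 != b'' by apply: phi_neq; exact: (sep_neq u1).
      have q0c : q0 != c'' by apply: phi_neq; exact: (sep_neq u2).
      have bc' : b'' != c'' by apply: phi_neq; exact: (sep_neq u3).
      have hst : sep3 u q0 s t.
        case: (nbr2 _ p1 q0b) => Eb; case: (nbr2 _ p2 q0c) => Ec;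
          rewrite Eb Ec in u1 u2 u3 bc'.
        - by rewrite eqxx in bc'.
        - by split.
        - by split => //; rewrite sep_sym.
        - by rewrite eqxx in bc'.
      case: hst => h1 h2 h3.
      have up : u = p by apply: (med_uniq h1 h2 h3 s1 s2 s3).
      rewrite up in uM.
      case: uM => a2 [b2 [c2 [ha2 hb2 hc2 hs3]]].
      have : q0 \in [:: a2; b2; c2].
        apply: (supp_contains hs3) => w hw wq; apply: Hatt => //.
        by move: (in3 ha2 hb2 hc2 hw); rewrite in_setD1 => /andP[].
      by rewrite !inE => /or3P[]/eqP E; [move: ha2 | move: hb2 | move: hc2];
        rewrite -E in_setD1 eqxx.
    rewrite !inE !negb_or in hq; case/and3P: hq => qa qb qc.
    have ha' : a \in Y :\ q0 by rewrite in_setD1 ha andbT eq_sym.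
    have hb' : b' \in Y :\ q0 by rewrite in_setD1 hb andbT eq_sym.
    have hc' : c' \in Y :\ q0 by rewrite in_setD1 hc andbT eq_sym.
    exists a, b', c'; split => //.
    case/suppP: hsu => [hs3 [p1 p2 p3]]; apply/suppP; split => //.
    by split; rewrite /Tc2 inE ?p1 ?p2 ?p3 /= !inE !negb_or ?qa ?qb ?qc.
  have sz2 : #|Tc2| + 3 = 2 * #|Y :\ q0|.
    have h := mlt_split Tc q0; rewrite m0 in h.
    rewrite hY'; rewrite hY in hsz; rewrite /Tc2; clear -h hsz; lia.
  have st2 : [set s; t] \in Tc2 by rewrite /Tc2 inE pst !inE !negb_or q0s q0t.
  have [q [qY2 qs qt m2]] := IH _ _ hY' cov2 sz2 _ _ st2.
  move: qY2; rewrite in_setD1 => /andP[qq0 qY].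
  exists q; split => //.
    by case/orP: os => /eqP ->.
  rewrite -m2 /mlt; apply: eq_card => p'; rewrite /Tc2 !inE.
  case: (boolP (q \in p')) => qp; rewrite ?andbF ?andbT //.
  case: (boolP (p' \in Tc)) => pT; rewrite ?andbF ?andbT //.
  apply: Logic.eq_sym; apply/negP => q0p.
  have : p' \in [set p in Tc | q0 \in p] by rewrite inE pT q0p.
  rewrite M2 !inE => /orP[]/eqP E; move: qp; rewrite E !inE (negbTE qq0) ?(negbTE qs) ?(negbTE qt) //.
case: (eqVneq q0 b) => [Eb|nb].
  rewrite -Eb in hbc *; have [q [qY q1 q2 m]] := stepB c hbc.
  by exists q.
case: (eqVneq q0 c) => [Ec|nc].
  rewrite -Ec in hbc *; rewrite pairC in hbc; have [q [qY q1 q2 m]] := stepB b hbc.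
  by exists q.
by exists q0.
Qed.

Lemma final_sec (Tc : {set {set X}}) : 3 <= #|X| -> triplet_cover e phi Tc ->
  (forall Tc', triplet_cover e phi Tc' -> #|Tc| <= #|Tc'|) -> min_mult_eq Tc 2.
Proof.
move=> hX [hpair hcov] hmin.
have tc2Y : forall T, triplet_cover e phi T -> Ycover [set: X] T.
  move=> T [hp hc]; split.
    move=> p pT; have /cards2P [a [b [ab E]]] : #|p| == 2 by rewrite hp.
    by exists a, b; rewrite !inE.
  move=> v vM; have [a [b [c H]]] := hc v (inM_nonleaf vM).
  by exists a, b, c; rewrite !inE.
have Y2tc : forall T, Ycover [set: X] T -> triplet_cover e phi T.
  move=> T [hp hc]; split.
    by move=> p pT; have [a [b [_ _ ab ->]]] := hp p pT; rewrite cards2 ab.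
  move=> v vint; have [a [b [c [h1 h2 h3]]]] := int_triple vint.
  have [a' [b' [c' [_ _ _ H]]]] := hc v (ex_intro _ a (ex_intro _ b (ex_intro _ c
     (And4 (in_setT a) (in_setT b) (in_setT c) (And3 h1 h2 h3))))).
  by exists a', b', c'.
have covTc := tc2Y Tc (conj hpair hcov).
have hY : #|[set: X]| = (#|X| - 3).+3 by rewrite cardsT; clear -hX; lia.
have hY3 : 2 < #|[set: X]| by rewrite cardsT.
have [T0 [cov0 sz0]] := ub hY.
have le0 := hmin T0 (Y2tc T0 cov0).
have lb0 := lb hY covTc.
have hsz : #|Tc| + 3 = 2 * #|[set: X]|.
  by apply/eqP; rewrite eqn_leq lb0 andbT; apply: leq_trans sz0; rewrite leq_add2r.
have /card_gt0P [p pT] : 0 < #|Tc|.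
  by rewrite lt0n; apply/eqP => E0; move: hsz; rewrite E0 hY; clear; lia.
have /cards2P [b [c [bc E]]] : #|p| == 2 by rewrite hpair.
rewrite E in pT.
have [q [_ _ _ mq]] := mainS hY covTc hsz pT.
split; last by exists q.
by move=> x; apply: (mult_ge2 covTc _ hY3); rewrite in_setT.
Qed.

End TreeBasics.

Unset Implicit Arguments.

Theorem corollary2 (X V : finType) (e : rel V) (phi : X -> V)
    (Tc : {set {set X}}) :
  3 <= #|X| ->
  binary_Xtree e phi ->
  min_triplet_cover e phi Tc ->
  min_mult_eq Tc 2.
Proof.
move=> hX [[esym [eirr [econn eacyc]]] [phi_inj [leaf_deg int_deg]]] [htc hmin].
apply: final_sec => //; exact: phi_inj.
Qed.
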